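(* Let $N, S \ge 1$, let $\overline{C}_1,\dots,\overline{C}_S \in \mathbb{R}^{N\times N}$ be symmetric matrices, and let $h \in \Sigma_N$. Define $D_h = \mathrm{diag}(h)$ and the matrix $M \in \mathbb{R}^{S\times S}$ by $M_{pq} = \langle D_h \overline{C}_p, \overline{C}_q D_h\rangle_F$. Then $M$ is positive semi-definite, so $\|x\|_M := \sqrt{x^\top M x}$ defines a (pseudo-)norm on $\mathbb{R}^S$ and $d_M(x,y)=\|x-y\|_M$ a Mahalanobis (pseudo-)distance. Moreover, for any $w^{(1)}, w^{(2)} \in \Sigma_S$, $$GW_2\Big(\sum_{s=1}^S w^{(1)}_s \overline{C}_s,\ \sum_{s=1}^S w^{(2)}_s \overline{C}_s,\ h,\ h\Big) \le \|w^{(1)} - w^{(2)}\|_M .$$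
   Context: $\Sigma_N = \{h \in \mathbb{R}_+^N : \sum_i h_i = 1\}$. For $h^X\in\Sigma_{N^X}$, $h^Y\in\Sigma_{N^Y}$, $\mathcal{U}(h^X,h^Y) = \{T \in \mathbb{R}_+^{N^X\times N^Y} : T\mathbf{1}_{N^Y} = h^X,\ T^\top \mathbf{1}_{N^X} = h^Y\}$. For matrices $C^X \in \mathbb{R}^{N^X\times N^X}$, $C^Y\in\mathbb{R}^{N^Y\times N^Y}$, the Gromov–Wasserstein distance is $GW_2(C^X,C^Y,h^X,h^Y) = \big(\min_{T\in\mathcal{U}(h^X,h^Y)} \sum_{i,j,k,l} (C^X_{ij} - C^Y_{kl})^2 T_{ik}T_{jl}\big)^{1/2}$. $\langle A,B\rangle_F = \mathrm{tr}(A^\top B)$. *)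

(* Defs.v *)
From HB Require Import structures.
From mathcomp Require Import all_boot all_order all_algebra.
From mathcomp Require Import boolp classical_sets reals.
Set Implicit Arguments. Unset Strict Implicit. Unset Printing Implicit Defensive.
Import Order.TTheory GRing.Theory Num.Theory.
Local Open Scope ring_scope.
Local Open Scope classical_set_scope.

Section Defs.
Variable R : realType.

Definition simplex (N : nat) (h : 'rV[R]_N) : Prop :=
  (forall i, 0 <= h 0 i) /\ \sum_i h 0 i = 1.

Definition coupling (NX NY : nat) (hX : 'rV[R]_NX) (hY : 'rV[R]_NY)
  (T : 'M[R]_(NX, NY)) : Prop :=
  [/\ forall i k, 0 <= T i k,
      forall i, \sum_k T i k = hX 0 i
    & forall k, \sum_i T i k = hY 0 k].

Definition gw_cost (NX NY : nat) (CX : 'M[R]_NX) (CY : 'M[R]_NY)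
  (T : 'M[R]_(NX, NY)) : R :=
  \sum_i \sum_j \sum_k \sum_l (CX i j - CY k l) ^+ 2 * T i k * T j l.

(* GW_2 = (min over couplings of the cost)^(1/2); the minimum is written as an
   infimum (it is attained, the coupling polytope being compact) *)
Definition GW2 (NX NY : nat) (CX : 'M[R]_NX) (CY : 'M[R]_NY)
  (hX : 'rV[R]_NX) (hY : 'rV[R]_NY) : R :=
  Num.sqrt (inf [set c | exists T, coupling hX hY T /\ c = gw_cost CX CY T]).

Definition frob (m n : nat) (A B : 'M[R]_(m, n)) : R := \tr (A^T *m B).

Definition Mmat (N S : nat) (C : 'I_S -> 'M[R]_N) (h : 'rV[R]_N) : 'M[R]_S :=
  \matrix_(p, q) frob (diag_mx h *m C p) (C q *m diag_mx h).

Definition qform (S : nat) (M : 'M[R]_S) (x : 'rV[R]_S) : R :=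
  (x *m M *m x^T) 0 0.

Definition Mnorm (S : nat) (M : 'M[R]_S) (x : 'rV[R]_S) : R :=
  Num.sqrt (qform M x).

Definition wsum (N S : nat) (C : 'I_S -> 'M[R]_N) (w : 'rV[R]_S) : 'M[R]_N :=
  \sum_s w 0 s *: C s.

End Defs.

(* Main.v *)
Require Import Defs.
From HB Require Import structures.
From mathcomp Require Import all_boot all_order all_algebra.
From mathcomp Require Import boolp classical_sets reals.
From mathcomp Require Import ring.
Import Order.TTheory GRing.Theory Num.Theory.
Local Open Scope ring_scope.

Section Aux.
Variable R : realType.

Lemma sum_diag (N : nat) (h : 'rV[R]_N) (i : 'I_N) (F : 'I_N -> R) :
  \sum_k F k * diag_mx h i k = F i * h 0 i.
Proof.
rewrite (bigD1 i) //= big1 ?addr0; first by rewrite mxE eqxx mulr1n.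
by move=> k ne; rewrite mxE eq_sym (negbTE ne) mulr0n mulr0.
Qed.

Lemma MmatE (N S : nat) (C : 'I_S -> 'M[R]_N) (h : 'rV[R]_N) p q :
  Mmat C h p q = \sum_i \sum_j h 0 i * h 0 j * (C p j i * C q j i).
Proof.
rewrite /Mmat mxE /frob /mxtrace mul_diag_mx mul_mx_diag.
apply: eq_bigr => i _; rewrite mxE; apply: eq_bigr => j _; rewrite !mxE.
by ring.
Qed.

Lemma qformE (N S : nat) (C : 'I_S -> 'M[R]_N) (h : 'rV[R]_N) (x : 'rV[R]_S) :
  qform (Mmat C h) x =
  \sum_i \sum_j h 0 i * h 0 j * (\sum_p x 0 p * C p j i) ^+ 2.
Proof.
rewrite /qform !mxE.
under eq_bigr => q _ do rewrite !mxE.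
pose F p q i j := x 0 p * x 0 q * (h 0 i * h 0 j * (C p j i * C q j i)).
transitivity (\sum_q \sum_p \sum_i \sum_j F p q i j).
  apply: eq_bigr => q _; rewrite mulr_suml.
  apply: eq_bigr => p _; rewrite MmatE mulr_sumr mulr_suml.
  apply: eq_bigr => i _; rewrite mulr_sumr mulr_suml.
  by apply: eq_bigr => j _; rewrite /F; ring.
transitivity (\sum_i \sum_j \sum_p \sum_q F p q i j).
  rewrite exchange_big /= pair_big; under eq_bigr do rewrite pair_big.
  rewrite exchange_big [RHS]pair_big.
  apply: eq_bigr => ij _; rewrite pair_big //.
apply: eq_bigr => i _; apply: eq_bigr => j _.
rewrite expr2 mulr_suml mulr_sumr; apply: eq_bigr => p _.
rewrite mulr_sumr mulr_sumr; apply: eq_bigr => q _.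
by rewrite /F; ring.
Qed.

End Aux.

Theorem proposition1 (R : realType) (N S : nat) (hN : (0 < N)%N) (hS : (0 < S)%N)
  (C : 'I_S -> 'M[R]_N) (hsym : forall s, (C s)^T = C s)
  (h : 'rV[R]_N) (hh : simplex h) :
  (forall x : 'rV[R]_S, 0 <= qform (Mmat C h) x) /\
  (forall w1 w2 : 'rV[R]_S, simplex w1 -> simplex w2 ->
     GW2 (wsum C w1) (wsum C w2) h h <= Mnorm (Mmat C h) (w1 - w2)).
Proof.
have h0 : forall i, 0 <= h 0 i by case: hh.
have P1 : forall x : 'rV[R]_S, 0 <= qform (Mmat C h) x.
  move=> x; rewrite qformE; apply: sumr_ge0 => i _; apply: sumr_ge0 => j _.
  by rewrite mulr_ge0 ?sqr_ge0 // mulr_ge0.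
split => // w1 w2 _ _.
rewrite /GW2 /Mnorm ler_sqrt //.
have cE : gw_cost (wsum C w1) (wsum C w2) (diag_mx h) = qform (Mmat C h) (w1 - w2).
  rewrite qformE /gw_cost; apply: eq_bigr => i _; apply: eq_bigr => j _.
  under eq_bigr => k _ do rewrite sum_diag.
  rewrite -mulr_suml sum_diag.
  have -> : \sum_p (w1 - w2) 0 p * C p j i = wsum C w1 i j - wsum C w2 i j.
    rewrite /wsum !summxE -sumrB; apply: eq_bigr => p _.
    have E : C p i j = C p j i by rewrite -{1}(hsym p) mxE.
    by rewrite !mxE E mulrBl.
  by ring.
rewrite -cE; apply: ge_inf.
  exists 0 => c [T [[T0 _ _] ->]].
  rewrite /gw_cost; apply: sumr_ge0 => i _; apply: sumr_ge0 => j _; apply: sumr_ge0 => k _; apply: sumr_ge0 => l _.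
  by apply: mulr_ge0; [apply: mulr_ge0; [exact: sqr_ge0|exact: T0]|exact: T0].
exists (diag_mx h); split => //; split.
- by move=> i k; rewrite mxE mulrn_wge0.
- by move=> i; rewrite (eq_bigr (fun k => 1 * diag_mx h i k)) ?sum_diag ?mul1r // => k _; rewrite mul1r.
- move=> k; rewrite (eq_bigr (fun i => 1 * diag_mx h k i)) ?sum_diag ?mul1r // => i _.
  by rewrite mul1r !mxE eq_sym; have [->|ne] := eqVneq k i; rewrite ?eqxx // (negbTE ne) !mulr0n.
Qed.
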